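(* The feasible SINR region of a multicast system is log-convex: the set $\log(\Upsilon)=\{(\log\mu_1,\dots,\log\mu_N):\boldsymbol\mu\in\Upsilon,\ \boldsymbol\mu>\mathbf 0\}$ is a convex subset of $\mathbb R^N$.
   Context: Multicast system: $N$ transmitters $T_1,\dots,T_N$; transmitter $T_i$ has $K_i\geq1$ receivers $R_i^{k}$, $k\in\mathcal K_i=\{1,\dots,K_i\}$. Channel gains $g_{r_i^{k},t_j}\geq 0$ (from $T_j$ to $R_i^k$) with $g_{r_i^{k},t_i}>0$, such that for every choice $k_i\in\mathcal K_i$ ($i=1,\dots,N$) the $N\times N$ matrix with $(i,j)$ entry $g_{r_i^{k_i},t_j}/g_{r_i^{k_i},t_i}$ for $j\neq i$ and $0$ on the diagonal is irreducible; noise variance $\sigma^2>0$. For $\mathbf p\geq\mathbf 0$: $\gamma_i^{k}(\mathbf p)=\frac{g_{r_i^{k},t_i}p_i}{\sum_{j\neq i}g_{r_i^{k},t_j}p_j+\sigma^2}$, $\gamma_i(\mathbf p)=\min_{k\in\mathcal K_i}\gamma_i^k(\mathbf p)$, $\Gamma(\mathbf p)=(\gamma_1(\mathbf p),\dots,\gamma_N(\mathbf p))$. The feasible SINR region is $\Upsilon=\{\Gamma(\mathbf p):\mathbf p\in\mathbb R^N,\mathbf p\geq\mathbf 0\}$. *)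

(* Defs.v *)
From Stdlib Require Import Reals Lra List.
Import ListNotations.
Open Scope R_scope.

(* Conventions: transmitters/receiver-groups indexed by i in {0..N-1};
   receivers of T_i indexed by k in {0..K i - 1};
   g i k j = channel gain from T_j to receiver R_i^k;
   vectors in R^N are functions nat -> R (only coordinates < N matter). *)

Definition interference (N : nat) (g : nat -> nat -> nat -> R) (p : nat -> R)
  (i k : nat) : R :=
  fold_right Rplus 0
    (map (fun j => if Nat.eq_dec j i then 0 else g i k j * p j) (seq 0 N)).

Definition sinr_k (N : nat) (g : nat -> nat -> nat -> R) (sigma2 : R)
  (p : nat -> R) (i k : nat) : R :=
  g i k i * p i / (interference N g p i k + sigma2).

Fixpoint min_upto (f : nat -> R) (n : nat) : R :=
  match n with
  | O => f O
  | S m => Rmin (min_upto f m) (f (S m))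
  end.

Definition sinr (N : nat) (K : nat -> nat) (g : nat -> nat -> nat -> R)
  (sigma2 : R) (p : nat -> R) (i : nat) : R :=
  min_upto (fun k => sinr_k N g sigma2 p i k) (K i - 1)%nat.

(* Irreducibility of a nonnegative N x N matrix A : strong connectivity of
   the directed graph with an edge i -> j iff A i j > 0
   (every i <> j reachable; 1x1 matrices are irreducible). *)
Inductive reach (N : nat) (A : nat -> nat -> R) : nat -> nat -> Prop :=
  | reach_step : forall i j, (i < N)%nat -> (j < N)%nat -> 0 < A i j ->
      reach N A i j
  | reach_trans : forall i j l, reach N A i j -> reach N A j l -> reach N A i l.

Definition irreducible (N : nat) (A : nat -> nat -> R) : Prop :=
  forall i j, (i < N)%nat -> (j < N)%nat -> i <> j -> reach N A i j.

(* The normalized cross-gain matrix for a receiver choice kc : i |-> k_i *)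
Definition gain_matrix (g : nat -> nat -> nat -> R) (kc : nat -> nat)
  : nat -> nat -> R :=
  fun i j => if Nat.eq_dec i j then 0 else g i (kc i) j / g i (kc i) i.

Definition in_log_region (N : nat) (K : nat -> nat) (g : nat -> nat -> nat -> R)
  (sigma2 : R) (x : nat -> R) : Prop :=
  exists p : nat -> R,
    (forall i, (i < N)%nat -> 0 <= p i) /\
    (forall i, (i < N)%nat -> 0 < sinr N K g sigma2 p i /\
                              x i = ln (sinr N K g sigma2 p i)).

(* Main.v *)
Require Import Defs.
From Stdlib Require Import Reals Lra Lia List.
Import ListNotations.
Open Scope R_scope.

Lemma exp_le' x y : x <= y -> exp x <= exp y.
Proof. intros [H|H]; [left; now apply exp_increasing | subst; lra]. Qed.

Lemma ln_le' x y : 0 < x -> x <= y -> ln x <= ln y.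
Proof. intros Hx [H|H]; [left; now apply ln_increasing | subst; lra]. Qed.

Lemma exp_convex t u v : 0 <= t <= 1 ->
  exp (t * u + (1 - t) * v) <= t * exp u + (1 - t) * exp v.
Proof.
  intros Ht. set (m := t * u + (1 - t) * v).
  assert (Eu : exp u = exp m * exp (u - m)) by (rewrite <- exp_plus; f_equal; ring).
  assert (Ev : exp v = exp m * exp (v - m)) by (rewrite <- exp_plus; f_equal; ring).
  pose proof (exp_ineq1_le (u - m)). pose proof (exp_ineq1_le (v - m)).
  pose proof (exp_pos m).
  rewrite Eu, Ev.
  assert (t * (exp m * exp (u - m)) + (1 - t) * (exp m * exp (v - m)) >=
          exp m * (t * (1 + (u - m)) + (1 - t) * (1 + (v - m)))).
  { assert (exp m * t * (1 + (u-m)) <= exp m * t * exp (u - m))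
      by (apply Rmult_le_compat_l; nra).
    assert (exp m * (1-t) * (1 + (v-m)) <= exp m * (1-t) * exp (v - m))
      by (apply Rmult_le_compat_l; nra).
    nra. }
  assert (t * (1 + (u - m)) + (1 - t) * (1 + (v - m)) = 1) by (unfold m; ring).
  rewrite H3 in H2. lra.
Qed.

Lemma holder_term t a b A B : 0 <= t <= 1 -> 0 < a -> 0 < b -> 0 < A -> 0 < B ->
  exp (t * ln a + (1 - t) * ln b) <=
  exp (t * ln A + (1 - t) * ln B) * (t * (a / A) + (1 - t) * (b / B)).
Proof.
  intros Ht Ha Hb HA HB.
  pose proof (exp_convex t (ln (a / A)) (ln (b / B)) Ht).
  rewrite !exp_ln in H by (apply Rdiv_lt_0_compat; auto).
  unfold Rdiv in H. rewrite !ln_mult, !ln_Rinv in H by (auto; apply Rinv_0_lt_compat; auto).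
  replace (t * ln a + (1 - t) * ln b) with
    ((t * ln A + (1 - t) * ln B) + (t * (ln a + - ln A) + (1 - t) * (ln b + - ln B))) by ring.
  rewrite exp_plus. unfold Rdiv. apply Rmult_le_compat_l; [left; apply exp_pos | exact H].
Qed.

Definition lsum (f : nat -> R) (l : list nat) := fold_right Rplus 0 (map f l).

Lemma lsum_le f h l : (forall j, In j l -> f j <= h j) -> lsum f l <= lsum h l.
Proof.
  induction l; simpl; intros; unfold lsum in *; simpl. lra.
  apply Rplus_le_compat; auto with datatypes.
Qed.

Lemma lsum_lin (c1 c2 : R) f h l :
  lsum (fun j => c1 * f j + c2 * h j) l = c1 * lsum f l + c2 * lsum h l.
Proof. induction l; unfold lsum in *; simpl; [ring | rewrite IHl; ring]. Qed.

Lemma lsum_nonneg f l : (forall j, In j l -> 0 <= f j) -> 0 <= lsum f l.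
Proof.
  induction l; simpl; intros; unfold lsum in *; simpl. lra.
  apply Rplus_le_le_0_compat; auto with datatypes.
Qed.

Lemma min_upto_le f n k : (k <= n)%nat -> min_upto f n <= f k.
Proof.
  induction n; intros Hk; simpl.
  - replace k with 0%nat by lia. lra.
  - destruct (Nat.eq_dec k (S n)). subst. apply Rmin_r.
    eapply Rle_trans. apply Rmin_l. apply IHn. lia.
Qed.

Lemma min_upto_exists f n : exists k, (k <= n)%nat /\ min_upto f n = f k.
Proof.
  induction n; simpl. exists 0%nat; split; auto.
  destruct IHn as [k [Hk E]]. unfold Rmin. destruct Rle_dec.
  exists k; split; auto. exists (S n); auto.
Qed.

Lemma interf_mono N g p q i k :
  (forall j, (j < N)%nat -> 0 <= g i k j) ->
  (forall j, (j < N)%nat -> j <> i -> p j <= q j) ->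
  interference N g p i k <= interference N g q i k.
Proof.
  intros Hg Hpq. apply lsum_le. intros j Hj. apply in_seq in Hj.
  destruct Nat.eq_dec. lra. apply Rmult_le_compat_l. apply Hg; lia. apply Hpq; lia.
Qed.

Lemma interf_ext N g p q i k :
  (forall j, (j < N)%nat -> j <> i -> p j = q j) ->
  interference N g p i k = interference N g q i k.
Proof.
  intros Hpq. apply Rle_antisym; apply lsum_le; intros j Hj; apply in_seq in Hj;
  destruct Nat.eq_dec; try lra; rewrite Hpq by lia; lra.
Qed.

Lemma interf_nonneg N g p i k :
  (forall j, (j < N)%nat -> 0 <= g i k j) ->
  (forall j, (j < N)%nat -> 0 <= p j) ->
  0 <= interference N g p i k.
Proof.
  intros Hg Hp. apply lsum_nonneg. intros j Hj; apply in_seq in Hj.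
  destruct Nat.eq_dec. lra. apply Rmult_le_pos; [apply Hg|apply Hp]; lia.
Qed.

Lemma interf_holder N g px py sigma2 t i k :
  0 <= t <= 1 -> 0 < sigma2 ->
  (forall j, (j < N)%nat -> 0 <= g i k j) ->
  (forall j, (j < N)%nat -> 0 < px j) ->
  (forall j, (j < N)%nat -> 0 < py j) ->
  interference N g (fun j => exp (t * ln (px j) + (1 - t) * ln (py j))) i k + sigma2 <=
  exp (t * ln (interference N g px i k + sigma2) + (1 - t) * ln (interference N g py i k + sigma2)).
Proof.
  intros Ht Hs Hg Hx Hy.
  set (A := interference N g px i k + sigma2).
  set (B := interference N g py i k + sigma2).
  assert (HA : 0 < A) by (unfold A; pose proof (interf_nonneg N g px i k Hg ltac:(intros; left; auto)); lra).
  assert (HB : 0 < B) by (unfold B; pose proof (interf_nonneg N g py i k Hg ltac:(intros; left; auto)); lra).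
  set (G := exp (t * ln A + (1 - t) * ln B)).
  assert (HG : 0 < G) by apply exp_pos.
  assert (H1 : interference N g (fun j => exp (t * ln (px j) + (1 - t) * ln (py j))) i k <=
     (G * t / A) * interference N g px i k + (G * (1 - t) / B) * interference N g py i k).
  { unfold interference. fold (lsum (fun j => if Nat.eq_dec j i then 0 else g i k j * px j) (seq 0 N)).
    fold (lsum (fun j => if Nat.eq_dec j i then 0 else g i k j * py j) (seq 0 N)).
    rewrite <- lsum_lin. apply lsum_le. intros j Hj; apply in_seq in Hj.
    destruct Nat.eq_dec. lra.
    assert (Hj' : (j < N)%nat) by lia.
    pose proof (holder_term t (px j) (py j) A B Ht (Hx j Hj') (Hy j Hj') HA HB).
    fold G in H. pose proof (Hg j Hj').
    apply Rmult_le_compat_l with (r := g i k j) in H; auto.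
    replace (G * t / A * (g i k j * px j) + G * (1 - t) / B * (g i k j * py j)) with
      (g i k j * (G * (t * (px j / A) + (1 - t) * (py j / B)))) by (field; lra).
    lra. }
  assert (H2 : sigma2 <= G * (t * (sigma2 / A) + (1 - t) * (sigma2 / B))).
  { pose proof (holder_term t sigma2 sigma2 A B Ht Hs Hs HA HB). fold G in H.
    replace (t * ln sigma2 + (1 - t) * ln sigma2) with (ln sigma2) in H by ring.
    rewrite exp_ln in H; auto. }
  assert (E : (G * t / A) * interference N g px i k + (G * (1 - t) / B) * interference N g py i k
     + G * (t * (sigma2 / A) + (1 - t) * (sigma2 / B)) = G).
  { unfold A, B in *. field. lra. }
  lra.
Qed.

Lemma sinr_le_k N K g s p i k : (k < K i)%nat -> sinr N K g s p i <= sinr_k N g s p i k.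
Proof. intros; unfold sinr; apply min_upto_le; lia. Qed.

Lemma region_pos N K g s x
  (HK : forall i, (i < N)%nat -> (1 <= K i)%nat)
  (Hg_nonneg : forall i k j, (i < N)%nat -> (k < K i)%nat -> (j < N)%nat -> 0 <= g i k j)
  (Hg_direct : forall i k, (i < N)%nat -> (k < K i)%nat -> 0 < g i k i)
  (Hs : 0 < s) :
  in_log_region N K g s x ->
  exists p, (forall j, (j < N)%nat -> 0 < p j) /\
    (forall i, (i < N)%nat -> 0 < sinr N K g s p i /\ x i = ln (sinr N K g s p i)).
Proof.
  intros [p [H0 H1]]. exists p; split; auto.
  intros j Hj. destruct (H0 j Hj) as [H|H]; auto.
  destruct (H1 j Hj) as [Hp _].
  pose proof (sinr_le_k N K g s p j 0 ltac:(specialize (HK j Hj); lia)).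
  unfold sinr_k in H2. rewrite <- H in H2. rewrite Rmult_0_r, Rdiv_0_l in H2. lra.
Qed.

Theorem theorem5 (N : nat) (K : nat -> nat) (g : nat -> nat -> nat -> R)
  (sigma2 : R)
  (HN : (1 <= N)%nat)
  (HK : forall i, (i < N)%nat -> (1 <= K i)%nat)
  (Hg_nonneg : forall i k j, (i < N)%nat -> (k < K i)%nat -> (j < N)%nat ->
      0 <= g i k j)
  (Hg_direct : forall i k, (i < N)%nat -> (k < K i)%nat -> 0 < g i k i)
  (Hirr : forall kc : nat -> nat, (forall i, (i < N)%nat -> (kc i < K i)%nat) ->
      irreducible N (gain_matrix g kc))
  (Hsigma : 0 < sigma2) :
  forall (x y : nat -> R) (t : R),
    in_log_region N K g sigma2 x -> in_log_region N K g sigma2 y ->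
    0 <= t <= 1 ->
    in_log_region N K g sigma2 (fun i => t * x i + (1 - t) * y i).
Proof.
  intros x y t Rx Ry Ht.
  destruct (region_pos N K g sigma2 x HK Hg_nonneg Hg_direct Hsigma Rx) as [px [Hpx Hx]].
  destruct (region_pos N K g sigma2 y HK Hg_nonneg Hg_direct Hsigma Ry) as [py [Hpy Hy]].
  set (mu := fun i => exp (t * x i + (1 - t) * y i)).
  set (ph := fun j => exp (t * ln (px j) + (1 - t) * ln (py j))).
  set (D := fun p i k => interference N g p i k + sigma2).
  assert (HDpos : forall p i k, (i < N)%nat -> (k < K i)%nat ->
            (forall j, (j < N)%nat -> 0 <= p j) -> 0 < D p i k).
  { intros p i k Hi Hk Hp. unfold D.
    pose proof (interf_nonneg N g p i k (fun j Hj => Hg_nonneg i k j Hi Hk Hj) Hp). lra. }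
  assert (Hph : forall i k, (i < N)%nat -> (k < K i)%nat ->
            mu i * D ph i k <= g i k i * ph i).
  { intros i k Hi Hk.
    pose proof (interf_holder N g px py sigma2 t i k Ht Hsigma
                 (fun j Hj => Hg_nonneg i k j Hi Hk Hj) Hpx Hpy) as Hh.
    fold ph in Hh. fold (D ph i k) (D px i k) (D py i k) in Hh.
    set (G := exp (t * ln (D px i k) + (1 - t) * ln (D py i k))) in Hh.
    assert (HA : 0 < D px i k) by (apply HDpos; auto; intros; left; auto).
    assert (HB : 0 < D py i k) by (apply HDpos; auto; intros; left; auto).
    pose proof (Hg_direct i k Hi Hk) as Hgi.
    pose proof (Hpx i Hi). pose proof (Hpy i Hi).
    assert (Esx : sinr_k N g sigma2 px i k = g i k i * px i / D px i k) by reflexivity.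
    assert (Esy : sinr_k N g sigma2 py i k = g i k i * py i / D py i k) by reflexivity.
    assert (Hsx : 0 < sinr_k N g sigma2 px i k) by (rewrite Esx; apply Rdiv_lt_0_compat; auto; nra).
    assert (Hsy : 0 < sinr_k N g sigma2 py i k) by (rewrite Esy; apply Rdiv_lt_0_compat; auto; nra).
    assert (Hmu : mu i <= exp (t * ln (sinr_k N g sigma2 px i k) + (1 - t) * ln (sinr_k N g sigma2 py i k))).
    { unfold mu. apply exp_le'. destruct (Hx i Hi) as [Hx1 Hx2]. destruct (Hy i Hi) as [Hy1 Hy2].
      rewrite Hx2, Hy2.
      pose proof (ln_le' _ _ Hx1 (sinr_le_k N K g sigma2 px i k Hk)).
      pose proof (ln_le' _ _ Hy1 (sinr_le_k N K g sigma2 py i k Hk)). nra. }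
    assert (E : exp (t * ln (sinr_k N g sigma2 px i k) + (1 - t) * ln (sinr_k N g sigma2 py i k))
                = g i k i * ph i / G).
    { rewrite Esx, Esy. unfold Rdiv. rewrite !ln_mult, !ln_Rinv by (auto; try apply Rinv_0_lt_compat; auto; nra).
      unfold G, ph.
      transitivity (exp (ln (g i k i) + (t * ln (px i) + (1 - t) * ln (py i)) +
         - (t * ln (D px i k) + (1 - t) * ln (D py i k)))). f_equal; ring.
      rewrite exp_plus, exp_plus, exp_Ropp, exp_ln by auto. reflexivity. }
    rewrite E in Hmu.
    assert (HG : 0 < G) by apply exp_pos.
    assert (mu i * G <= g i k i * ph i).
    { apply (Rmult_le_compat_r G) in Hmu; [|lra]. unfold Rdiv in Hmu.
      rewrite Rmult_assoc, Rinv_l in Hmu by lra. lra. }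
    assert (0 < mu i) by apply exp_pos.
    assert (mu i * D ph i k <= mu i * G) by (apply Rmult_le_compat_l; lra).
    lra. }

  assert (Hmupos : forall i, 0 < mu i) by (intros; apply exp_pos).
  assert (Hphpos : forall j, 0 < ph j) by (intros; apply exp_pos).
  set (S := fun p : nat -> R => (forall j, 0 <= p j <= ph j) /\
        (forall i k, (i < N)%nat -> (k < K i)%nat -> mu i * D p i k <= g i k i * p i)).
  assert (HSph : S ph) by (split; [intros j; pose proof (Hphpos j); lra | exact Hph]).
  set (E := fun j r => exists p, S p /\ r = - p j).
  assert (Hc : forall j, {m | is_lub (E j) m}).
  { intros j. apply completeness.
    - exists 0. intros r [p [[Hb _] Hr]]. rewrite Hr. specialize (Hb j). lra.
    - exists (- ph j). exists ph; auto. }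
  set (ps := fun j => - proj1_sig (Hc j)).
  assert (Hps_le : forall p j, S p -> ps j <= p j).
  { intros p j Hp. unfold ps. destruct (proj2_sig (Hc j)) as [Hub _]; set (m := proj1_sig (Hc j)) in *.
    assert (m >= - p j) by (apply Rle_ge, Hub; exists p; auto). lra. }
  assert (Hps_glb : forall c j, (forall p, S p -> c <= p j) -> c <= ps j).
  { intros c j Hcp. unfold ps. destruct (proj2_sig (Hc j)) as [_ Hl]; set (m := proj1_sig (Hc j)) in *.
    assert (m <= - c). { apply Hl. intros r [p [Hp Hr]]. rewrite Hr. specialize (Hcp p Hp). lra. }
    lra. }
  assert (Hps0 : forall j, 0 <= ps j) by (intros j; apply Hps_glb; intros p [Hb _]; apply Hb).
  assert (Hpsph : forall j, ps j <= ph j) by (intros j; apply Hps_le; auto).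
  assert (HSps : S ps).
  { split. intros j; split; auto.
    intros i k Hi Hk.
    pose proof (Hg_direct i k Hi Hk) as Hgi.
    assert (mu i * D ps i k / g i k i <= ps i).
    { apply Hps_glb. intros p Hp. destruct Hp as [Hb Hp].
      pose proof (Hp i k Hi Hk) as Hpik.
      assert (D ps i k <= D p i k).
      { unfold D. apply Rplus_le_compat_r. apply interf_mono.
        - intros j Hj; apply Hg_nonneg; auto.
        - intros j _ _. apply Hps_le. split; auto.
      }
      apply Rmult_le_reg_r with (g i k i); auto. unfold Rdiv.
      rewrite Rmult_assoc, Rinv_l by lra. pose proof (Hmupos i). nra. }
    apply Rmult_le_compat_r with (r := g i k i) in H; [|lra].
    unfold Rdiv in H. rewrite Rmult_assoc, Rinv_l, Rmult_1_r in H by lra. lra. }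
  exists ps. split. intros; auto.
  intros i Hi.
  assert (Hk_ge : forall k, (k < K i)%nat -> mu i <= sinr_k N g sigma2 ps i k).
  { intros k Hk. destruct HSps as [_ H]. specialize (H i k Hi Hk).
    assert (0 < D ps i k) by (apply HDpos; auto).
    unfold sinr_k. fold (D ps i k). apply Rmult_le_reg_r with (D ps i k); auto.
    unfold Rdiv. rewrite Rmult_assoc, Rinv_l by lra. lra. }
  assert (Hge : mu i <= sinr N K g sigma2 ps i).
  { unfold sinr. destruct (min_upto_exists (fun k => sinr_k N g sigma2 ps i k) (K i - 1))
      as [k [Hk ->]]. apply Hk_ge. specialize (HK i Hi). lia. }
  assert (Heq : sinr N K g sigma2 ps i = mu i).
  { destruct Hge as [Hlt|]; [|auto].
    exfalso.
    set (s := sinr N K g sigma2 ps i) in *.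
    set (r := mu i / s).
    assert (Hs : 0 < s) by (pose proof (Hmupos i); lra).
    assert (Hr0 : 0 < r) by (apply Rdiv_lt_0_compat; auto).
    assert (Hr1 : r < 1) by (unfold r; apply Rmult_lt_reg_r with s; auto; unfold Rdiv;
       rewrite Rmult_assoc, Rinv_l; lra).
    assert (Hpsi : 0 < ps i).
    { destruct HSps as [_ H]. assert (HK0 : (0 < K i)%nat) by (specialize (HK i Hi); lia).
      specialize (H i 0%nat Hi HK0).
      assert (0 < D ps i 0%nat) by (apply HDpos; auto).
      pose proof (Hg_direct i 0%nat Hi HK0). pose proof (Hmupos i).
      pose proof (Hps0 i). destruct H3; auto. rewrite <- H3 in H. nra. }
    set (q := fun j => if Nat.eq_dec j i then r * ps i else ps j).
    assert (Hqle : forall j, q j <= ps j).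
    { intros j; unfold q; destruct Nat.eq_dec; subst; nra. }
    assert (HSq : S q).
    { split.
      - intros j. specialize (Hqle j). specialize (Hpsph j). unfold q in *.
        destruct Nat.eq_dec; subst; split; try nra. apply Hps0.
      - intros i' k Hi' Hk.
        destruct (Nat.eq_dec i' i) as [->|Hne].
        + assert (Dq : D q i k = D ps i k).
          { unfold D. f_equal. apply interf_ext. intros j _ Hj. unfold q.
            destruct Nat.eq_dec; [contradiction|auto]. }
          rewrite Dq. unfold q. destruct Nat.eq_dec; [|contradiction].
          specialize (Hk_ge k Hk). pose proof (sinr_le_k N K g sigma2 ps i k Hk).
          fold s in H. unfold sinr_k in H. fold (D ps i k) in H.
          assert (0 < D ps i k) by (apply HDpos; auto).
          assert (s * D ps i k <= g i k i * ps i).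
          { apply Rmult_le_compat_r with (r := D ps i k) in H; [|lra].
            unfold Rdiv in H. rewrite Rmult_assoc, Rinv_l, Rmult_1_r in H by lra. lra. }
          unfold r. unfold Rdiv.
          replace (g i k i * (mu i * / s * ps i)) with (mu i * / s * (g i k i * ps i)) by ring.
          replace (mu i * D ps i k) with (mu i * / s * (s * D ps i k)) by (field; lra).
          apply Rmult_le_compat_l; auto.
          pose proof (Hmupos i). pose proof (Rinv_0_lt_compat s Hs). nra.
        + destruct HSps as [_ H]. specialize (H i' k Hi' Hk).
          assert (D q i' k <= D ps i' k).
          { unfold D. apply Rplus_le_compat_r. apply interf_mono.
            - intros j Hj; apply Hg_nonneg; auto.
            - intros j _ _. apply Hqle. }
          assert (q i' = ps i') by (unfold q; destruct Nat.eq_dec; [contradiction|auto]).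
          rewrite H1. pose proof (Hmupos i'). nra. }
    pose proof (Hps_le q i HSq). unfold q in H. destruct Nat.eq_dec; [|contradiction].
    nra. }
  rewrite Heq. split. apply Hmupos. unfold mu. rewrite ln_exp. reflexivity.
Qed.
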